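(* Let $A$ be an $n\times n$ and $B$ an $m\times m$ complex matrix, and for $k=1,\dots,m$ let $1\le i_k,j_k\le n$ and $\alpha_k,\beta_k\in\mathbb{C}$. Let $M$ be the $(n+m)\times(n+m)$ block matrix $M=\begin{bmatrix}A & [\alpha_1\mathbf{e}_{i_1},\dots,\alpha_m\mathbf{e}_{i_m}]\\ [\beta_1\mathbf{e}_{j_1},\dots,\beta_m\mathbf{e}_{j_m}]^T & B\end{bmatrix}$, where $\mathbf{e}_i$ is the $i$-th standard basis column vector of $\mathbb{C}^n$ (so the $k$-th column of the upper-right block is $\alpha_k\mathbf{e}_{i_k}$ and the $k$-th row of the lower-left block is $\beta_k\mathbf{e}_{j_k}^T$). Then $$\det(M)=\sum_{S,T}\varepsilon_{S,T}\,\alpha_T\beta_S\,B_{S,T}A_{S,T}$$ for some signs $\varepsilon_{S,T}\in\{\pm1\}$, where the sum is over all pairs $S,T\subseteq\{1,\dots,m\}$ with $|S|=|T|$.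
   Context: For $S,T\subseteq\{1,\dots,m\}$ with $|S|=|T|$: $B_{S,T}$ is the determinant of the matrix obtained from $B$ by deleting the rows indexed by $S$ and the columns indexed by $T$ (the determinant of the empty matrix being $1$). Let $J(S)=\{j_k: k\in S\}$ and $I(T)=\{i_k:k\in T\}$; $A_{S,T}$ is the determinant of the matrix obtained from $A$ by deleting the rows indexed by $I(T)$ and the columns indexed by $J(S)$ if $|I(T)|=|J(S)|=|T|=|S|$, and $A_{S,T}=0$ otherwise. Finally $\alpha_T=\prod_{k\in T}\alpha_k$ and $\beta_S=\prod_{k\in S}\beta_k$. *)

(* Defs.v *)
From HB Require Import structures.
From mathcomp Require Import all_boot all_order all_algebra.
Set Implicit Arguments. Unset Strict Implicit. Unset Printing Implicit Defensive.
Import GRing.Theory.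
Local Open Scope ring_scope.

(* [minor A Rs Cs] : determinant of the matrix obtained from A by deleting the
   rows in Rs and the columns in Cs (remaining rows/columns kept in increasing
   order); 0 if the resulting matrix is not square. det of the empty matrix is 1. *)
Definition minor (R : comNzRingType) (p q : nat) (A : 'M[R]_(p, q))
  (Rs : {set 'I_p}) (Cs : {set 'I_q}) : R :=
  match #|~: Rs| =P #|~: Cs| with
  | ReflectT e =>
      \det (\matrix_(i < #|~: Rs|, j < #|~: Rs|)
              A (enum_val i) (enum_val (cast_ord e j)))
  | ReflectF _ => 0
  end.

Definition Bminor (R : comNzRingType) (m : nat) (B : 'M[R]_m) (S T : {set 'I_m}) : R :=
  minor B S T.

Definition Aminor (R : comNzRingType) (n m : nat) (A : 'M[R]_n)
  (i j : 'I_m -> 'I_n) (S T : {set 'I_m}) : R :=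
  if [&& #|i @: T| == #|T|, #|j @: S| == #|S| & #|S| == #|T|]
  then minor A (i @: T) (j @: S) else 0.

Definition bordered (R : comNzRingType) (n m : nat) (A : 'M[R]_n) (B : 'M[R]_m)
  (i j : 'I_m -> 'I_n) (alpha beta : 'I_m -> R) : 'M[R]_(n + m) :=
  block_mx A (\matrix_(r < n, k < m) (alpha k * (r == i k)%:R))
             (\matrix_(k < m, c < n) (beta k * (c == j k)%:R)) B.

(* Main.v *)
Require Import Defs.
From HB Require Import structures.
From mathcomp Require Import all_boot all_order all_algebra.
From mathcomp Require Import fingroup perm zify ring.
Import GRing.Theory.
Local Open Scope ring_scope.
Set Implicit Arguments. Unset Strict Implicit. Unset Printing Implicit Defensive.

Lemma pick_some (T : finType) (P : pred T) x :
  P x -> (forall y, P y -> y = x) -> [pick y | P y] = Some x.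
Proof. by move=> Px U; case: pickP => [y /U -> // | /(_ x)]; rewrite Px. Qed.

Lemma pick_none (T : finType) (P : pred T) :
  (forall y, ~~ P y) -> [pick y | P y] = None.
Proof. by move=> N; case: pickP => // y; rewrite (negbTE (N y)). Qed.

Lemma pick_ex (T : finType) (P : pred T) x0 :
  (exists x, P x) -> P (odflt x0 [pick x | P x]).
Proof. by case=> x Px; case: pickP => //= H; rewrite H in Px. Qed.

Section Ext.
Variables (T : finType) (k : nat) (f : 'I_k -> T).
Hypothesis finj : injective f.

Definition extf (t : 'S_k) (y : T) : T :=
  if [pick x | f x == y] is Some x then f (t x) else y.

Lemma extf_f t x : extf t (f x) = f (t x).
Proof. by rewrite /extf (@pick_some _ _ x) // => y /eqP /finj. Qed.

Lemma extf_out t y : (forall x, f x != y) -> extf t y = y.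
Proof. by move=> H; rewrite /extf pick_none. Qed.

Lemma extf_inj t : injective (extf t).
Proof.
move=> y1 y2.
case: (pickP (fun x => f x == y1)) => [x1 /eqP <- | n1];
case: (pickP (fun x => f x == y2)) => [x2 /eqP <- | n2].
- by rewrite !extf_f => /finj /perm_inj ->.
- rewrite extf_f extf_out => [e|x]; last by rewrite n2.
  by have := n2 (t x1); rewrite e eqxx.
- rewrite extf_f extf_out => [e|x]; last by rewrite n1.
  by have := n1 (t x2); rewrite e eqxx.
- by rewrite !extf_out // => x; rewrite ?n1 ?n2.
Qed.

Definition ext (t : 'S_k) : {perm T} := perm (@extf_inj t).

Lemma ext_f t x : ext t (f x) = f (t x).
Proof. by rewrite permE extf_f. Qed.

Lemma ext_out t y : (forall x, f x != y) -> ext t y = y.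
Proof. by move=> H; rewrite permE extf_out. Qed.

Lemma ext_case (P : T -> Prop) y : (forall x, P (f x)) -> ((forall x, f x != y) -> P y) -> P y.
Proof.
move=> H1 H2; case: (pickP (fun x => f x == y)) => [x /eqP <- | n]; first exact: H1.
by apply: H2 => x; rewrite n.
Qed.

Lemma extM t1 t2 : ext (t1 * t2)%g = (ext t1 * ext t2)%g.
Proof.
apply/permP => y; rewrite permM; apply: (@ext_case (fun y => ext (t1 * t2)%g y = ext t2 (ext t1 y))).
  by move=> x; rewrite !ext_f permM.
by move=> H; rewrite !ext_out.
Qed.

Lemma ext1 : ext 1%g = 1%g.
Proof.
apply/permP => y; rewrite perm1; apply: (@ext_case (fun y => ext 1%g y = y)).
  by move=> x; rewrite ext_f perm1.
by move=> H; rewrite ext_out.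
Qed.

Lemma ext_tperm a b : ext (tperm a b) = tperm (f a) (f b).
Proof.
apply/permP => y; apply: (@ext_case (fun y => ext (tperm a b) y = tperm (f a) (f b) y)).
  move=> x; rewrite ext_f; case: tpermP => [->|->|xa xb]; rewrite ?tpermL ?tpermR //.
  by rewrite tpermD // inj_eq //; apply/eqP => e; [apply: xa | apply: xb].
by move=> H; rewrite ext_out // tpermD.
Qed.

Lemma odd_ext t : odd_perm (ext t) = odd_perm t.
Proof.
case: (prod_tpermP t) => ts ->; elim: ts => [|[a b] ts IH] /=.
  by move=> _; rewrite big_nil ext1 !odd_perm1.
case/andP => dab /IH {}IH; rewrite !big_cons extM !odd_permM IH ext_tperm !odd_tperm.
by rewrite (inj_eq finj).
Qed.
End Ext.

Section Main.
Variables (R : comNzRingType) (n m : nat) (A : 'M[R]_n) (B : 'M[R]_m)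
  (i j : 'I_m -> 'I_n) (alpha beta : 'I_m -> R).

Local Notation M := (bordered A B i j alpha beta).
Local Notation L := (@lshift n m).
Local Notation Rt := (@rshift n m).

Lemma ML a c : M (L a) (L c) = A a c.
Proof. by rewrite /bordered block_mxEul. Qed.
Lemma MU a k : M (L a) (Rt k) = alpha k * (a == i k)%:R.
Proof. by rewrite /bordered block_mxEur mxE. Qed.
Lemma MD k c : M (Rt k) (L c) = beta k * (c == j k)%:R.
Proof. by rewrite /bordered block_mxEdl mxE. Qed.
Lemma MB k k' : M (Rt k) (Rt k') = B k k'.
Proof. by rewrite /bordered block_mxEdr. Qed.

Definition isL (r : 'I_(n + m)) : bool := (r < n)%N.
Lemma isL_L a : isL (L a). Proof. by rewrite /isL /= ltn_ord. Qed.
Lemma isL_R k : isL (Rt k) = false. Proof. by rewrite /isL /= ltnNge leq_addr. Qed.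

Lemma isLP (r : 'I_(n + m)) : isL r -> exists a, r = L a.
Proof. by case: (split_ordP r) => [a -> | k ->]; [exists a | rewrite isL_R]. Qed.
Lemma isRP (r : 'I_(n + m)) : ~~ isL r -> exists k, r = Rt k.
Proof. by case: (split_ordP r) => [a -> | k ->]; [rewrite isL_L | exists k]. Qed.

Definition patS (s : 'S_(n + m)) := [set k | isL (s (Rt k))].
Definition patT (s : 'S_(n + m)) := [set k | isL ((s^-1)%g (Rt k))].

Definition Pp (S T : {set 'I_m}) (s : 'S_(n + m)) : bool :=
  [&& [forall k in T, s (L (i k)) == Rt k],
      [forall k in S, s (Rt k) == L (j k)],
      [forall a in ~: (i @: T), isL (s (L a))] &
      [forall k in ~: S, ~~ isL (s (Rt k))]].

Definition Fs (s : 'S_(n + m)) : R := (-1) ^+ s * \prod_r M r (s r).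

Lemma prod0 (s : 'S_(n + m)) r : M r (s r) = 0 -> \prod_r M r (s r) = 0.
Proof. by move=> H; rewrite (bigD1 r) //= H mul0r. Qed.

Lemma zero_lemma S T s : patS s = S -> patT s = T -> ~~ Pp S T s -> Fs s = 0.
Proof.
move=> pS pT nP; rewrite /Fs; suff -> : \prod_r M r (s r) = 0 by rewrite mulr0.
move: nP; rewrite /Pp !negb_and => /or4P [| | |].
- move/forallPn => /= [k]; rewrite negb_imply => /andP [kT nk].
  have : k \in patT s by rewrite pT.
  rewrite inE => /isLP [a ea].
  have esa : s (L a) = Rt k by rewrite -ea permKV.
  apply: (@prod0 _ (L a)); rewrite esa MU.
  suff -> : (a == i k) = false by rewrite mulr0.
  by apply/negP => /eqP eai; move: nk; rewrite -eai esa eqxx.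
- move/forallPn => /= [k]; rewrite negb_imply => /andP [kS nk].
  have : k \in patS s by rewrite pS.
  rewrite inE => /isLP [c ec].
  apply: (@prod0 _ (Rt k)); rewrite ec MD.
  suff -> : (c == j k) = false by rewrite mulr0.
  by apply/negP => /eqP ecj; move: nk; rewrite ec ecj eqxx.
- move/forallPn => /= [a]; rewrite negb_imply => /andP [aT na].
  have [k ek] := isRP na.
  have : k \in patT s by rewrite inE -ek permK isL_L.
  rewrite pT => kT.
  apply: (@prod0 _ (L a)); rewrite ek MU.
  suff -> : (a == i k) = false by rewrite mulr0.
  apply/negP => /eqP eai; move: aT; rewrite inE eai imset_f //.
move/forallPn => /= [k]; rewrite negb_imply negbK => /andP [kS nk].
by move: kS; rewrite inE -pS inE nk.
Qed.

Lemma Pp_pat S T s : Pp S T s -> patS s = S /\ patT s = T.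
Proof.
case/and4P => /forallP F1 /forallP F2 /forallP F3 /forallP F4; split.
  apply/setP => k; rewrite inE; case: (boolP (k \in S)) => kS.
    by have := F2 k; rewrite kS /= => /eqP ->; rewrite isL_L.
  by have := F4 k; rewrite inE kS /= => /negbTE.
apply/setP => k; rewrite inE; case: (boolP (k \in T)) => kT.
  have := F1 k; rewrite kT /= => /eqP <-; rewrite permK isL_L //.
apply/negbTE/negP => /isLP [a ea].
have esa : s (L a) = Rt k by rewrite -ea permKV.
case: (boolP (a \in i @: T)) => [/imsetP [k' k'T eak'] | naT].
  have := F1 k'; rewrite k'T /= -eak' esa => /eqP /rshift_inj ekk.
  by move: kT; rewrite ekk k'T.
by have := F3 a; rewrite inE naT /= esa isL_R.
Qed.

Lemma Pp_inj S T s : Pp S T s -> {in T &, injective i} /\ {in S &, injective j}.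
Proof.
case/and4P => /forallP F1 /forallP F2 _ _; split.
  move=> k1 k2 k1T k2T e.
  have := F1 k1; have := F1 k2; rewrite k1T k2T /= e => /eqP -> /eqP.
  by move/rshift_inj.
move=> k1 k2 k1S k2S e.
have := F2 k1; have := F2 k2; rewrite k1S k2S /= e => /eqP <- /eqP.
by move/perm_inj/rshift_inj.
Qed.


Lemma Pp_card S T s : Pp S T s -> #|S| = #|T|.
Proof.
move=> P; have [iT jS] := Pp_inj P.
case/and4P: P => /forallP F1 /forallP F2 /forallP F3 /forallP F4.
have h1 : (#|~: (i @: T)| <= #|~: (j @: S)|)%N.
  rewrite -(card_in_imset (f := fun a => s (L a))); last first.
    by move=> a1 a2 _ _ /perm_inj /lshift_inj.
  rewrite -(card_imset _ (@lshift_inj n m)); apply: subset_leq_card.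
  apply/subsetP => _ /imsetP [a aT ->].
  have := F3 a; rewrite aT /= => /isLP [c ec]; rewrite ec imset_f //.
  rewrite inE; apply/imsetP => [[k kS ecj]].
  have := F2 k; rewrite kS /= -ecj -ec => /eqP /perm_inj /eqP.
  by rewrite eq_rlshift.
have h2 : (#|~: S| <= #|~: T|)%N.
  rewrite -(card_in_imset (f := fun k => s (Rt k))); last first.
    by move=> a1 a2 _ _ /perm_inj /rshift_inj.
  rewrite -(card_imset _ (@rshift_inj n m)); apply: subset_leq_card.
  apply/subsetP => _ /imsetP [k kS ->].
  have := F4 k; rewrite kS /= => /isRP [k' ek]; rewrite ek imset_f //.
  rewrite inE; apply/negP => k'T.
  have := F1 k'; rewrite k'T /= -ek => /eqP /perm_inj /eqP.
  by rewrite eq_lrshift.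
have c1 := cardsC (i @: T); have c2 := cardsC (j @: S).
have c3 := cardsC S; have c4 := cardsC T.
rewrite card_ord in c1 c2; rewrite card_ord in c3 c4.
rewrite (card_in_imset iT) in c1; rewrite (card_in_imset jS) in c2.
lia.
Qed.


Lemma enum_val_surj (T0 : finType) (X : {set T0}) a :
  a \in X -> exists x : 'I_#|X|, enum_val x = a.
Proof. by move=> aX; exists (enum_rank_in aX a); rewrite enum_rankK_in. Qed.

Section Case.
Variables (S T : {set 'I_m}).
Hypotheses (iT : {in T &, injective i}) (jS : {in S &, injective j})
  (cST : #|S| = #|T|).

Local Notation ra := (~: (i @: T)).
Local Notation ca := (~: (j @: S)).
Local Notation rb := (~: S).
Local Notation cb := (~: T).

Lemma eqA : #|ra| = #|ca|.
Proof.
have c1 := cardsC (i @: T); have c2 := cardsC (j @: S).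
rewrite card_ord in c1 c2.
rewrite (card_in_imset iT) in c1; rewrite (card_in_imset jS) in c2.
lia.
Qed.

Lemma eqB : #|rb| = #|cb|.
Proof. have c3 := cardsC S; have c4 := cardsC T; rewrite card_ord in c3 c4; lia. Qed.

Definition eA (x : 'I_#|ra|) : 'I_(n + m) := L (enum_val x).
Definition fA (x : 'I_#|ra|) : 'I_(n + m) := L (enum_val (cast_ord eqA x)).
Definition eB (y : 'I_#|rb|) : 'I_(n + m) := Rt (enum_val y).
Definition fB (y : 'I_#|rb|) : 'I_(n + m) := Rt (enum_val (cast_ord eqB y)).

Lemma eA_inj : injective eA.
Proof. by move=> x y /lshift_inj /enum_val_inj. Qed.
Lemma fA_inj : injective fA.
Proof. by move=> x y /lshift_inj /enum_val_inj /cast_ord_inj. Qed.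
Lemma eB_inj : injective eB.
Proof. by move=> x y /rshift_inj /enum_val_inj. Qed.
Lemma fB_inj : injective fB.
Proof. by move=> x y /rshift_inj /enum_val_inj /cast_ord_inj. Qed.

Lemma eA_T x k : k \in T -> (eA x == L (i k)) = false.
Proof.
move=> kT; rewrite /eA (inj_eq (@lshift_inj _ _)); apply/negbTE/eqP => e.
by have := enum_valP x; rewrite e inE imset_f.
Qed.
Lemma fA_S x k : k \in S -> (fA x == L (j k)) = false.
Proof.
move=> kS; rewrite /fA (inj_eq (@lshift_inj _ _)); apply/negbTE/eqP => e.
by have := enum_valP (cast_ord eqA x); rewrite e inE imset_f.
Qed.
Lemma eB_S y k : k \in S -> (eB y == Rt k) = false.
Proof.
move=> kS; rewrite /eB (inj_eq (@rshift_inj _ _)); apply/negbTE/eqP => e.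
by have := enum_valP y; rewrite e inE kS.
Qed.
Lemma fB_T y k : k \in T -> (fB y == Rt k) = false.
Proof.
move=> kT; rewrite /fB (inj_eq (@rshift_inj _ _)); apply/negbTE/eqP => e.
by have := enum_valP (cast_ord eqB y); rewrite e inE kT.
Qed.

Lemma cover (r : 'I_(n + m)) :
  [\/ exists x, r = eA x, exists y, r = eB y,
      exists2 k, k \in T & r = L (i k) | exists2 k, k \in S & r = Rt k].
Proof.
case: (split_ordP r) => [a -> | k ->].
  case: (boolP (a \in ra)) => [/enum_val_surj [x <-] | ].
    by apply: Or41; exists x.
  by rewrite inE negbK => /imsetP [k kT ->]; apply: Or43; exists k.
case: (boolP (k \in rb)) => [/enum_val_surj [y <-] | ].
  by apply: Or42; exists y.
by rewrite inE negbK => kS; apply: Or44; exists k.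
Qed.

Lemma coverA c : c \in ca -> exists x, fA x = L c.
Proof.
move=> /enum_val_surj [x ex]; exists (cast_ord (esym eqA) x).
by rewrite /fA cast_ordKV ex.
Qed.
Lemma coverB k : k \in cb -> exists y, fB y = Rt k.
Proof.
move=> /enum_val_surj [y ey]; exists (cast_ord (esym eqB) y).
by rewrite /fB cast_ordKV ey.
Qed.

Definition s0f (r : 'I_(n + m)) : 'I_(n + m) :=
  if [pick x | eA x == r] is Some x then fA x else
  if [pick y | eB y == r] is Some y then fB y else
  if [pick k | (k \in T) && (L (i k) == r)] is Some k then Rt k else
  if [pick k | (k \in S) && (Rt k == r)] is Some k then L (j k) else r.

Definition s0g (c : 'I_(n + m)) : 'I_(n + m) :=
  if [pick x | fA x == c] is Some x then eA x else
  if [pick y | fB y == c] is Some y then eB y else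
  if [pick k | (k \in T) && (Rt k == c)] is Some k then L (i k) else
  if [pick k | (k \in S) && (L (j k) == c)] is Some k then Rt k else c.

Lemma s0f_eA x : s0f (eA x) = fA x.
Proof. by rewrite /s0f (@pick_some _ _ x) // => y /eqP /eA_inj. Qed.
Lemma s0f_eB y : s0f (eB y) = fB y.
Proof.
rewrite /s0f pick_none => [|x]; last by rewrite /eA /eB eq_lrshift.
by rewrite (@pick_some _ _ y) // => z /eqP /eB_inj.
Qed.
Lemma s0f_T k : k \in T -> s0f (L (i k)) = Rt k.
Proof.
move=> kT; rewrite /s0f pick_none => [|x]; last by rewrite eA_T.
rewrite pick_none => [|y]; last by rewrite /eB eq_rlshift.
rewrite (@pick_some _ _ k) ?kT ?eqxx //.
by move=> z /andP [zT /eqP /lshift_inj /iT]; apply.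
Qed.
Lemma s0f_S k : k \in S -> s0f (Rt k) = L (j k).
Proof.
move=> kS; rewrite /s0f pick_none => [|x]; last by rewrite /eA eq_lrshift.
rewrite pick_none => [|y]; last by rewrite eB_S.
rewrite pick_none => [|z]; last by rewrite eq_lrshift andbF.
rewrite (@pick_some _ _ k) ?kS ?eqxx //.
by move=> z /andP [_ /eqP /rshift_inj].
Qed.

Lemma s0g_fA x : s0g (fA x) = eA x.
Proof. by rewrite /s0g (@pick_some _ _ x) // => y /eqP /fA_inj. Qed.
Lemma s0g_fB y : s0g (fB y) = eB y.
Proof.
rewrite /s0g pick_none => [|x]; last by rewrite /fA /fB eq_lrshift.
by rewrite (@pick_some _ _ y) // => z /eqP /fB_inj.
Qed.
Lemma s0g_T k : k \in T -> s0g (Rt k) = L (i k).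
Proof.
move=> kT; rewrite /s0g pick_none => [|x]; last by rewrite /fA eq_lrshift.
rewrite pick_none => [|y]; last by rewrite fB_T.
rewrite (@pick_some _ _ k) ?kT ?eqxx //.
by move=> z /andP [_ /eqP /rshift_inj].
Qed.
Lemma s0g_S k : k \in S -> s0g (L (j k)) = Rt k.
Proof.
move=> kS; rewrite /s0g pick_none => [|x]; last by rewrite fA_S.
rewrite pick_none => [|y]; last by rewrite /fB eq_rlshift.
rewrite pick_none => [|z]; last by rewrite eq_rlshift andbF.
rewrite (@pick_some _ _ k) ?kS ?eqxx //.
by move=> z /andP [zS /eqP /lshift_inj /jS]; apply.
Qed.

Lemma s0K : cancel s0f s0g.
Proof.
move=> r; case: (cover r) => [[x ->]|[y ->]|[k kT ->]|[k kS ->]].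
- by rewrite s0f_eA s0g_fA.
- by rewrite s0f_eB s0g_fB.
- by rewrite s0f_T // s0g_T.
- by rewrite s0f_S // s0g_S.
Qed.

Definition s0 : 'S_(n + m) := perm (can_inj s0K).

Lemma s0E r : s0 r = s0f r. Proof. by rewrite permE. Qed.

Definition Phi (p : 'S_#|ra| * 'S_#|rb|) : 'S_(n + m) :=
  (s0 * ext fA_inj p.1 * ext fB_inj p.2)%g.

Lemma Phi_eA p x : Phi p (eA x) = fA (p.1 x).
Proof.
rewrite !permM s0E s0f_eA ext_f ext_out // => y.
by rewrite /fA /fB eq_rlshift.
Qed.
Lemma Phi_eB p y : Phi p (eB y) = fB (p.2 y).
Proof.
rewrite !permM s0E s0f_eB (ext_out fA_inj) ?ext_f // => x.
by rewrite /fA /fB eq_lrshift.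
Qed.
Lemma Phi_T p k : k \in T -> Phi p (L (i k)) = Rt k.
Proof.
move=> kT; rewrite !permM s0E s0f_T // (ext_out fA_inj) ?(ext_out fB_inj) //.
all: by move=> y; rewrite ?fB_T ?fA_S // /fA /fB ?eq_lrshift ?eq_rlshift.
Qed.
Lemma Phi_S p k : k \in S -> Phi p (Rt k) = L (j k).
Proof.
move=> kS; rewrite !permM s0E s0f_S // (ext_out fA_inj) ?(ext_out fB_inj) //.
all: by move=> y; rewrite ?fB_T ?fA_S // /fA /fB ?eq_lrshift ?eq_rlshift.
Qed.


Lemma Phi_Pp p : Pp S T (Phi p).
Proof.
apply/and4P; split; apply/forallP.
- by move=> k; apply/implyP => kT; rewrite Phi_T.
- by move=> k; apply/implyP => kS; rewrite Phi_S.
- move=> a; apply/implyP => /enum_val_surj [x <-].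
  by rewrite -/(eA x) Phi_eA /fA isL_L.
- move=> k; apply/implyP => /enum_val_surj [y <-].
  by rewrite -/(eB y) Phi_eB /fB isL_R.
Qed.

Lemma Phi_inj : injective Phi.
Proof.
move=> [p1 p2] [q1 q2] e; congr (_, _); apply/permP.
  by move=> x; have := Phi_eA (p1, p2) x; rewrite e Phi_eA => /fA_inj.
by move=> y; have := Phi_eB (p1, p2) y; rewrite e Phi_eB => /fB_inj.
Qed.

Lemma Phi_surj s : Pp S T s -> exists p, Phi p = s.
Proof.
move=> P; have P' := P.
case/and4P: P => /forallP F1 /forallP F2 /forallP F3 /forallP F4.
have hA x : exists x', fA x' == s (eA x).
  have := F3 (enum_val x); rewrite enum_valP /= => /isLP [c ec].
  have : c \in ca.
    rewrite inE; apply/imsetP => [[k kS ecj]].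
    have := F2 k; rewrite kS /= -ecj -ec => /eqP /perm_inj /eqP.
    by rewrite eq_rlshift.
  by case/coverA => x' ex'; exists x'; rewrite ex' /eA ec.
have hB y : exists y', fB y' == s (eB y).
  have := F4 (enum_val y); rewrite enum_valP /= => /isRP [k' ek].
  have : k' \in cb.
    rewrite inE; apply/negP => k'T.
    have := F1 k'; rewrite k'T /= -ek => /eqP /perm_inj /eqP.
    by rewrite eq_lrshift.
  by case/coverB => y' ey'; exists y'; rewrite ey' /eB ek.
pose gA x := odflt x [pick x' | fA x' == s (eA x)].
pose gB y := odflt y [pick y' | fB y' == s (eB y)].
have gAE x : fA (gA x) = s (eA x).
  by apply/eqP; exact: (@pick_ex _ (fun x' => fA x' == s (eA x)) x (hA x)).
have gBE y : fB (gB y) = s (eB y).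
  by apply/eqP; exact: (@pick_ex _ (fun y' => fB y' == s (eB y)) y (hB y)).
have gA_inj : injective gA.
  by move=> x1 x2 e; apply: eA_inj; apply: (@perm_inj _ s); rewrite -!gAE e.
have gB_inj : injective gB.
  by move=> x1 x2 e; apply: eB_inj; apply: (@perm_inj _ s); rewrite -!gBE e.
exists (perm gA_inj, perm gB_inj); apply/permP => r.
case: (cover r) => [[x ->]|[y ->]|[k kT ->]|[k kS ->]].
- by rewrite Phi_eA /= permE gAE.
- by rewrite Phi_eB /= permE gBE.
- by rewrite Phi_T //; have := F1 k; rewrite kT => /eqP ->.
- by rewrite Phi_S //; have := F2 k; rewrite kS => /eqP ->.
Qed.

Lemma prod_split (G : 'I_(n + m) -> R) :
  \prod_r G r = \prod_(x < #|ra|) G (eA x) * \prod_(y < #|rb|) G (eB y)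
              * \prod_(k in T) G (L (i k)) * \prod_(k in S) G (Rt k).
Proof.
rewrite big_split_ord /=.
rewrite (bigID (fun a => a \in ra)) (bigID (fun k => k \in rb)) /=.
have e1 : \prod_(a | a \in ra) G (L a) = \prod_(x < #|ra|) G (eA x).
  by rewrite big_enum_val.
have e2 : \prod_(a | a \notin ra) G (L a) = \prod_(k in T) G (L (i k)).
  rewrite -(big_imset (fun a => G (L a)) iT) /=; apply: eq_bigl => a.
  by rewrite inE negbK.
have e3 : \prod_(k | k \in rb) G (Rt k) = \prod_(y < #|rb|) G (eB y).
  by rewrite big_enum_val.
have e4 : \prod_(k | k \notin rb) G (Rt k) = \prod_(k in S) G (Rt k).
  by apply: eq_bigl => k; rewrite inE negbK.
rewrite e1 e2 e3 e4; ring.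
Qed.

Lemma Fs_Phi p : Fs (Phi p) = (-1) ^+ (odd_perm s0 (+) odd_perm p.1 (+) odd_perm p.2) *
   (\prod_(x < #|ra|) A (enum_val x) (enum_val (cast_ord eqA (p.1 x)))
  * \prod_(y < #|rb|) B (enum_val y) (enum_val (cast_ord eqB (p.2 y)))
  * \prod_(k in T) alpha k * \prod_(k in S) beta k).
Proof.
rewrite /Fs.
have -> : odd_perm (Phi p) = odd_perm s0 (+) odd_perm p.1 (+) odd_perm p.2.
  by rewrite /Phi !odd_permM !odd_ext.
congr (_ * _); rewrite prod_split.
congr (_ * _ * _ * _).
- by apply: eq_bigr => x _; rewrite Phi_eA /eA /fA ML.
- by apply: eq_bigr => y _; rewrite Phi_eB /eB /fB MB.
- by apply: eq_bigr => k kT; rewrite Phi_T // MU eqxx mulr1.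
- by apply: eq_bigr => k kS; rewrite Phi_S // MD eqxx mulr1.
Qed.

Lemma main_case : exists b : bool,
  \sum_(s | Pp S T s) Fs s =
  (-1) ^+ b * (\prod_(k in T) alpha k) * (\prod_(k in S) beta k)
    * Bminor B S T * Aminor A i j S T.
Proof.
exists (odd_perm s0).
rewrite (reindex Phi) /=; last first.
  exists (fun s => odflt (1, 1)%g [pick p | Phi p == s]).
    move=> p _; rewrite (@pick_some _ _ p) //; last by move=> q /eqP /Phi_inj.
  move=> s; rewrite inE => /Phi_surj ex.
  apply/eqP; apply: (@pick_ex _ (fun p => Phi p == s)).
  by case: ex => p <-; exists p.
rewrite (eq_bigl predT) => [|p]; last by rewrite Phi_Pp.
rewrite /Aminor (card_in_imset iT) (card_in_imset jS) cST !eqxx /=.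
rewrite /Bminor /minor.
case: eqP => eB'; last by case: eB'; exact: eqB.
case: eqP => eA'; last by case: eA'; exact: eqA.
rewrite (eq_irrelevance eB' eqB) (eq_irrelevance eA' eqA).
have eMA (t1 : 'S_#|ra|) : \prod_(x < #|ra|) (\matrix_(i2 < #|ra|, j0 < #|ra|) A (enum_val i2) (enum_val (cast_ord eqA j0))) x (t1 x)
    = \prod_(x < #|ra|) A (enum_val x) (enum_val (cast_ord eqA (t1 x))).
  by apply: eq_bigr => x _; rewrite mxE.
have eMB (t2 : 'S_#|rb|) : \prod_(y < #|rb|) (\matrix_(i2 < #|rb|, j0 < #|rb|) B (enum_val i2) (enum_val (cast_ord eqB j0))) y (t2 y)
    = \prod_(y < #|rb|) B (enum_val y) (enum_val (cast_ord eqB (t2 y))).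
  by apply: eq_bigr => y _; rewrite mxE.
have -> : \sum_p Fs (Phi p) = \sum_(t1 : 'S_#|ra|) \sum_(t2 : 'S_#|rb|) Fs (Phi (t1, t2)).
  by rewrite pair_big; apply: eq_bigr => [[]].
rewrite /determinant [RHS]mulrC big_distrl /=; apply: eq_bigr => t1 _.
rewrite mulrA big_distrr /=; apply: eq_bigr => t2 _.
rewrite Fs_Phi /= eMA eMB.
move: (odd_perm s0) (odd_perm t1) (odd_perm t2) => x y z.
rewrite !signr_addb.
move: (\prod_(x < #|ra|) A (enum_val x) (enum_val (cast_ord eqA (t1 x))))
  (\prod_(y < #|rb|) B (enum_val y) (enum_val (cast_ord eqB (t2 y))))
  (\prod_(k in T) alpha k) (\prod_(k in S) beta k).
move=> PA PB Pa Pb.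
move: ((-1 : R) ^+ x) ((-1 : R) ^+ y) ((-1 : R) ^+ z) => a b c.
ring.
Qed.

End Case. End Main.

Lemma C_Pp (R : comNzRingType) (n m : nat) (A : 'M[R]_n) (B : 'M[R]_m)
  (i j : 'I_m -> 'I_n) (alpha beta : 'I_m -> R) (S T : {set 'I_m}) :
  \sum_(s | (patS s, patT s) == (S, T)) Fs A B i j alpha beta s
  = \sum_(s | Pp i j S T s) Fs A B i j alpha beta s.
Proof.
rewrite (bigID (Pp i j S T)) /= [X in _ + X]big1 ?addr0.
  apply: eq_bigl => s; case: (boolP (Pp i j S T s)) => [P|]; last by rewrite andbF.
  by have [e1 e2] := Pp_pat P; rewrite e1 e2 eqxx.
move=> s /andP [H nP]; move: H; rewrite xpair_eqE => /andP [/eqP eS /eqP eT].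
exact: (zero_lemma A B alpha beta eS eT nP).
Qed.

Unset Implicit Arguments.
Set Strict Implicit.

Theorem lemmaA1 (R : comNzRingType) (n m : nat) (A : 'M[R]_n) (B : 'M[R]_m)
  (i j : 'I_m -> 'I_n) (alpha beta : 'I_m -> R) :
  exists eps : {set 'I_m} -> {set 'I_m} -> bool,
    \det (bordered A B i j alpha beta) =
    \sum_(S : {set 'I_m}) \sum_(T : {set 'I_m} | #|S| == #|T|)
      (-1) ^+ eps S T * (\prod_(k in T) alpha k) * (\prod_(k in S) beta k)
        * Bminor B S T * Aminor A i j S T.
Proof.
have key : forall S T : {set 'I_m}, exists b : bool, #|S| == #|T| ->
   \sum_(s | Pp i j S T s) Fs A B i j alpha beta s =
   (-1) ^+ b * (\prod_(k in T) alpha k) * (\prod_(k in S) beta k)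
        * Bminor B S T * Aminor A i j S T.
  move=> S T; case: (boolP (#|S| == #|T|)) => [/eqP cST|]; last by exists false.
  case: (boolP (#|i @: T| == #|T|)) => [/imset_injP iT|niT].
    case: (boolP (#|j @: S| == #|S|)) => [/imset_injP jS|njS].
      by have [b Hb] := main_case A B alpha beta iT jS cST; exists b.
    exists false => _.
    have -> : \sum_(s | Pp i j S T s) Fs A B i j alpha beta s = 0.
      apply: big_pred0 => s; apply/negP => /Pp_inj [_ /imset_injP].
      by rewrite (negbTE njS).
    by rewrite /Aminor (negbTE njS) /= ?andbF mulr0.
  exists false => _.
  have -> : \sum_(s | Pp i j S T s) Fs A B i j alpha beta s = 0.
    apply: big_pred0 => s; apply/negP => /Pp_inj [/imset_injP].
    by rewrite (negbTE niT).
  by rewrite /Aminor (negbTE niT) /= mulr0.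
have [eps1 H1] : exists f : {set 'I_m} -> ({set 'I_m} -> bool), forall S T : {set 'I_m},
    #|S| == #|T| ->
   \sum_(s | Pp i j S T s) Fs A B i j alpha beta s =
   (-1) ^+ f S T * (\prod_(k in T) alpha k) * (\prod_(k in S) beta k)
        * Bminor B S T * Aminor A i j S T.
  exact: (fin_all_exists (fun S => fin_all_exists (key S))).
exists eps1.
have -> : \det (bordered A B i j alpha beta) = \sum_s Fs A B i j alpha beta s by [].
rewrite (partition_big (fun s => (patS s, patT s)) predT) //=.
have -> : forall G : {set 'I_m} * {set 'I_m} -> R,
    \sum_(p | true) G p = \sum_(S : {set 'I_m}) \sum_(T : {set 'I_m}) G (S, T).
  by move=> G; rewrite pair_big; apply: eq_bigr => [[]].
apply: eq_bigr => S _.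
rewrite (bigID (fun T : {set 'I_m} => #|S| == #|T|)) /= [X in _ + X]big1 ?addr0.
  apply: eq_bigr => T cST; rewrite C_Pp; exact: H1.
move=> T nST; rewrite C_Pp big_pred0 // => s.
by apply/negP => /Pp_card /eqP; rewrite (negbTE nST).
Qed.
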